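(* Let $x,y$ be vertices of the Farey graph $\mathcal{F}$ with $d_{\mathcal{C}}(x,y)\ge 2$, and let $\mathcal{P}$ be a path in $\mathcal{F}$ joining $x$ and $y$. Then $\mathcal{P}$ is a geodesic in $\mathcal{F}$ if and only if $\mathcal{P}$ is contained in the ladder $\mathcal{L}(x,y)$ and is a geodesic in the graph $\mathcal{L}(x,y)$.
   Context: The Farey graph $\mathcal{F}$ has vertex set $\mathbb{Q}\cup\{\infty\}$ (vertices $p/q$ in lowest terms, $\infty=1/0$), with $p/q$ and $r/s$ adjacent iff $|ps-qr|=1$; $d_{\mathcal{C}}$ is its path metric with unit edge lengths. It is embedded in $\overline{\mathbb{H}}=\mathbb{H}^2\cup\partial\mathbb{H}^2$ (upper half-plane model) with edges realized as hyperbolic geodesics; the closures of the complementary regions are ideal triangles called Farey triangles. For distinct $x,y\in\partial\mathbb{H}^2$, the ladder $\mathcal{L}(x,y)$ is the union of all Farey triangles whose interior meets the hyperbolic geodesic from $x$ to $y$, regarded as the subgraph of $\mathcal{F}$ formed by the vertices and edges of these triangles (with its own path metric). *)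

(* Defs.v *)
From HB Require Import structures.
From mathcomp Require Import all_boot all_order all_algebra.
Set Implicit Arguments. Unset Strict Implicit. Unset Printing Implicit Defensive.
Import Order.TTheory GRing.Theory Num.Theory.

(* Vertices of the Farey graph: Q ∪ {∞}; [None] is ∞ = 1/0.
   A rational is stored in lowest terms with positive denominator. *)
Definition fvert := option rat.

Definition fnum (v : fvert) : int := if v is Some r then numq r else 1%R.
Definition fden (v : fvert) : int := if v is Some r then denq r else 0%R.

Definition fadj : rel fvert :=
  fun u v => (`| fnum u * fden v - fden u * fnum v | == 1)%R.

Definition elt (u v : fvert) : bool :=
  match u, v with
  | Some a, Some b => (a < b)%R
  | Some _, None => true
  | None, _ => false
  end.

(* strict cyclic order on the circle ∂H^2 = R ∪ {∞} *)
Definition cyc (u v w : fvert) : bool :=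
  [|| elt u v && elt v w, elt v w && elt w u | elt w u && elt u v].

(* z lies in the closed arc of ∂H^2 with endpoints a, b not containing c *)
Definition in_arc (a b c z : fvert) : bool :=
  [|| z == a, z == b | cyc a z b != cyc a c b].

(* The hyperbolic geodesic from x to y meets the interior of the ideal
   triangle with vertices a, b, c: this fails exactly when x and y lie in
   a common closed complementary arc of {a,b,c}. *)
Definition geod_meets (x y a b c : fvert) : bool :=
  ~~ [|| in_arc a b c x && in_arc a b c y,
         in_arc b c a x && in_arc b c a y
       | in_arc c a b x && in_arc c a b y].

Definition farey_triangle (a b c : fvert) : Prop :=
  fadj a b /\ fadj b c /\ fadj c a.

(* Edge relation of the ladder L(x,y): an edge of a Farey triangle whose
   interior meets the geodesic from x to y. *)
Definition ladder_adj (x y : fvert) (u v : fvert) : Prop :=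
  exists w, farey_triangle u v w /\ geod_meets x y u v w.

(* A path in a graph with edge relation G starting at x: the vertex
   sequence x :: p; it joins x and last x p, and its length is size p. *)
Fixpoint is_path (G : fvert -> fvert -> Prop) (x : fvert) (p : seq fvert) : Prop :=
  if p is y :: p' then G x y /\ is_path G y p' else True.

Definition is_geodesic (G : fvert -> fvert -> Prop) (x : fvert) (p : seq fvert) : Prop :=
  is_path G x p /\
  forall q, is_path G x q -> last x q = last x p -> size p <= size q.

Definition fadjP (u v : fvert) : Prop := fadj u v.

(* Main.v *)
Require Import Defs.
From mathcomp Require Import all_boot all_order all_algebra ring lra zify.
Import Order.TTheory GRing.Theory Num.Theory.
Local Open Scope ring_scope.

Definition D (u v : fvert) : int := fnum u * fden v - fden u * fnum v.

Lemma fadjE u v : fadj u v = (`|D u v| == 1).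
Proof. by []. Qed.

Lemma DN u v : D v u = - D u v.
Proof. rewrite /D; ring. Qed.

Lemma fadj_sym u v : fadj u v = fadj v u.
Proof. by rewrite !fadjE DN normrN. Qed.

Lemma fden_ge0 u : 0 <= fden u.
Proof. case: u => [r|] //=; exact: ltW (denq_gt0 r). Qed.

Lemma eltD u v : elt u v = (D u v < 0).
Proof.
case: u v => [a|] [b|] /=; rewrite /D /=.
- have -> : (a < b) = lt_rat a b by [].
  by rewrite lt_ratE subr_lt0 [denq a * _]mulrC.
- by rewrite mulr0 mulr1 sub0r oppr_lt0 denq_gt0.
- by rewrite mul1r mul0r subr0 ltNge ltW // denq_gt0.
- by rewrite mulr0 mul0r subrr.
Qed.

Lemma D0 u v : D u v = 0 -> u = v.
Proof.
case: u v => [a|] [b|] //=; rewrite /D /=.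
- move/eqP; rewrite subr_eq0 [denq a * _]mulrC => /eqP h.
  by congr Some; apply/eqP; rewrite rat_eq h.
- by rewrite mulr0 mulr1 sub0r => /eqP; rewrite oppr_eq0 gt_eqF // denq_gt0.
- by rewrite mul1r mul0r subr0 => /eqP; rewrite gt_eqF // denq_gt0.
Qed.

Lemma Dneq0 u v : u != v -> D u v != 0.
Proof. by apply: contra => /eqP /D0 ->. Qed.

Lemma fadj_neq u v : fadj u v -> u != v.
Proof. by apply: contraL => /eqP ->; rewrite fadjE /D mulrC subrr. Qed.

Lemma elt_trans u v w : elt u v -> elt v w -> elt u w.
Proof. case: u v w => [a|] [b|] [c|] //=; exact: lt_trans. Qed.

Lemma elt_asym u v : elt u v -> elt v u -> False.
Proof. case: u v => [a|] [b|] //= h1 h2; by move: (lt_trans h1 h2); rewrite ltxx. Qed.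

Definition mk (n d : int) : fvert := if d == 0 then None else Some (n%:~R / d%:~R).

Lemma mk_vec n d : coprime `|n| `|d| ->
  exists2 e : int, e * e = 1 & fnum (mk n d) = e * n /\ fden (mk n d) = e * d.
Proof.
rewrite /mk; have [->|dn0] := eqVneq d 0.
  rewrite /coprime gcdn0 => /eqP h.
  exists n; first by lia.
  by split => /=; [lia | rewrite mulr0].
move=> cnd; exists (Num.sg d); first by rewrite -expr2 sqr_sg dn0.
rewrite /= coprimeq_num // coprimeq_den // (negPf dn0); split => //.
by rewrite -normrEsg.
Qed.

Lemma sq1 (x : int) : (`|x| == 1) = (x * x == 1).
Proof. apply/eqP/eqP; lia. Qed.

Lemma mediants u v : fadj u v -> exists w1 w2,
  [/\ fadj u w1, fadj w1 v, fadj u w2, fadj w2 v &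
      0 < D u w1 * D w1 v /\ D u w2 * D w2 v < 0].
Proof.
rewrite fadjE sq1 => /eqP hs.
set nu := fnum u in hs *; set nv := fnum v in hs *.
set du := fden u in hs *; set dv := fden v in hs *.
have c1 : coprime `|nu + nv| `|du + dv|.
  rewrite -coprimezE; apply/coprimezP; exists (- du * D u v, nu * D u v) => /=.
  rewrite -hs /D -/nu -/nv -/du -/dv; ring.
have c2 : coprime `|nu - nv| `|du - dv|.
  rewrite -coprimezE; apply/coprimezP; exists (du * D u v, - nu * D u v) => /=.
  rewrite -hs /D -/nu -/nv -/du -/dv; ring.
have [e1 he1 [hn1 hd1]] := mk_vec _ _ c1.
have [e2 he2 [hn2 hd2]] := mk_vec _ _ c2.
exists (mk (nu + nv) (du + dv)), (mk (nu - nv) (du - dv)).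
have E1 : D u (mk (nu + nv) (du + dv)) = e1 * D u v.
  by rewrite /D hn1 hd1 -/nu -/du -/nv -/dv; ring.
have E2 : D (mk (nu + nv) (du + dv)) v = e1 * D u v.
  by rewrite /D hn1 hd1 -/nu -/du -/nv -/dv; ring.
have E3 : D u (mk (nu - nv) (du - dv)) = - e2 * D u v.
  by rewrite /D hn2 hd2 -/nu -/du -/nv -/dv; ring.
have E4 : D (mk (nu - nv) (du - dv)) v = e2 * D u v.
  by rewrite /D hn2 hd2 -/nu -/du -/nv -/dv; ring.
rewrite !fadjE !sq1 E1 E2 E3 E4; move: hs he1 he2.
set s := D u v; move=> hs he1 he2.
split; try (apply/eqP; nia); split; nia.
Qed.

Lemma neg_pos (A : int) : A != 0 -> (A < 0) = ~~ (0 < A).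
Proof. move=> h; apply/idP/idP; move: h; lia. Qed.

Lemma mul_pos (A B : int) : A != 0 -> B != 0 -> (0 < A * B) = ((0 < A) == (0 < B)).
Proof.
move=> hA hB; have [a|a] : A < 0 \/ 0 < A by lia.
- rewrite nmulr_rgt0 // (lt_gtF a) neg_pos //; by case: (0 < B).
- by rewrite pmulr_rgt0 // a.
Qed.

Lemma sign3 (A B C : int) : A != 0 -> B != 0 -> C != 0 ->
  ~~ [&& A < 0, B < 0 & 0 < C] -> ~~ [&& 0 < A, 0 < B & C < 0] ->
  [|| (A < 0) && (B < 0), (B < 0) && (- C < 0) | (- C < 0) && (A < 0)]
  = ((C < 0) == (0 < A * B)).
Proof.
move=> hA hB hC; rewrite oppr_lt0 mul_pos // !neg_pos //.
by case: (0 < A); case: (0 < B); case: (0 < C).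
Qed.

Lemma cycB a s b : a != b -> s != a -> s != b ->
  cyc a s b = (elt a b == (0 < D a s * D s b)).
Proof.
move=> hab hsa hsb.
have hA : D a s != 0 by apply: Dneq0; rewrite eq_sym.
have hB : D s b != 0 by apply: Dneq0.
have hC : D a b != 0 by apply: Dneq0.
rewrite /cyc !eltD [D b a]DN sign3 //.
- apply/negP => /and3P [h1 h2 h3].
  have e1 : elt a b by apply: (@elt_trans a s b); rewrite eltD.
  by apply: (@elt_asym a b) => //; rewrite eltD DN oppr_lt0.
- apply/negP => /and3P [h1 h2 h3].
  have e1 : elt b a by apply: (@elt_trans b s a); rewrite eltD DN oppr_lt0.
  by apply: (@elt_asym a b) => //; rewrite eltD.
Qed.

Lemma noncross a b s t : fadj a b -> fadj s t ->
  s != a -> s != b -> t != a -> t != b -> cyc a s b = cyc a t b.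
Proof.
move=> hab hst hsa hsb hta htb.
have nab := fadj_neq _ _ hab; have nst := fadj_neq _ _ hst.
rewrite !cycB //; congr (_ == _).
have h1 : D a s != 0 by apply: Dneq0; rewrite eq_sym.
have h2 : D s b != 0 by apply: Dneq0.
have h3 : D a t != 0 by apply: Dneq0; rewrite eq_sym.
have h4 : D t b != 0 by apply: Dneq0.
have pl : D a b * D s t = D a s * (- D t b) - D a t * (- D s b).
  rewrite /D; ring.
move: hab hst; rewrite !fadjE !sq1 => /eqP e1 /eqP e2.
move: pl e1 e2 h1 h2 h3 h4.
set A := D a s; set B := D s b; set C := D a t; set E := D t b.
set P := D a b; set Q := D s t => pl e1 e2 h1 h2 h3 h4.
apply/idP/idP; nia.
Qed.

From Stdlib Require Import Classical.

Lemma is_path_cat (G : fvert -> fvert -> Prop) x p1 p2 :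
  is_path G x (p1 ++ p2) <-> is_path G x p1 /\ is_path G (last x p1) p2.
Proof.
elim: p1 x => [|a p1 IH] x /=; first by split => // [[]].
rewrite IH; split; [by move=> [h [h1 h2]] | by move=> [[h h1] h2]].
Qed.

Lemma mem_split (z x : fvert) p : z \in x :: p ->
  exists p1 p2, p = p1 ++ p2 /\ last x p1 = z.
Proof.
elim: p x => [|a p IH] x.
  by rewrite mem_seq1 => /eqP ->; exists [::], [::].
rewrite in_cons => /orP [/eqP ->|]; first by exists [::], (a :: p).
move=> /IH [p1 [p2 [-> <-]]]; by exists (a :: p1), p2.
Qed.

Lemma shortcut (G : fvert -> fvert -> Prop) x p p1 p2 p3 r :
  is_geodesic G x p -> p = p1 ++ p2 ++ p3 -> is_path G (last x p1) r ->
  last (last x p1) r = last (last x p1) p2 -> (size p2 <= size r)%N.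
Proof.
move=> [hp hmin] ep hr hl.
have := hp; rewrite ep => /is_path_cat [h1 /is_path_cat [h2 h3]].
have := hmin (p1 ++ r ++ p3).
rewrite ep !size_cat leq_add2l leq_add2r; apply.
  apply/is_path_cat; split => //; apply/is_path_cat; split => //; by rewrite hl.
by rewrite !last_cat hl.
Qed.

Lemma sep a b s q : fadj a b -> is_path fadjP s q ->
  ~~ has (fun z => (z == a) || (z == b)) (s :: q) -> cyc a s b = cyc a (last s q) b.
Proof.
move=> hab; elim: q s => [|t q IH] s //= [hst hq].
rewrite negb_or => /andP [/norP [sa sb] hh].
rewrite -IH //; apply: noncross => //.
move: hh => /= /norP [/norP [ta tb] _]; by [].
move: hh => /= /norP [/norP [ta tb] _]; by [].
Qed.

Lemma path_of_edges (G : fvert -> fvert -> Prop) x p :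
  (forall p1 v p2, p = p1 ++ v :: p2 -> G (last x p1) v) -> is_path G x p.
Proof.
elim: p x => [|a p IH] x h //=; split; first exact: (h [::] a p).
apply: IH => p1 v p2 ep; apply: (h (a :: p1) v p2); by rewrite ep.
Qed.

Lemma lpath_fpath x y s q : is_path (ladder_adj x y) s q -> is_path fadjP s q.
Proof.
elim: q s => [|t q IH] s //= [[w [[h _] _]] hq]; split; [exact: h | exact: IH].
Qed.

Lemma core x y p :
  (forall q, is_path fadjP x q -> last x q = y -> (2 <= size q)%N) ->
  is_geodesic fadjP x p -> last x p = y ->
  forall p1 v p2, p = p1 ++ v :: p2 -> ladder_adj x y (last x p1) v.
Proof.
move=> hd hg hy p1 v p2 ep.
set u := last x p1.
have [hp _] := hg.
have := hp; rewrite ep => /is_path_cat [hp1 /= [huv hp2]].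
have hyv : last v p2 = y by rewrite -hy ep last_cat.
have hxy : x != y.
  apply/eqP => exy; have := hd [::] I; by rewrite /= exy => /(_ erefl).
have noB : forall w, fadj u w -> fadj w v -> in_arc v w u x -> False.
  move=> w uw wv hB.
  have vw : fadj v w by rewrite fadj_sym.
  case hh: (has (fun z => (z == v) || (z == w)) (x :: p1)); last first.
    have hc := sep v w x p1 vw hp1 (negbT hh).
    move: hh => /= /norP [/norP [xv xw] _].
    by move: hB; rewrite /in_arc -/u hc (negPf xv) (negPf xw) eqxx.
  move/hasP: hh => [z zin /orP [/eqP zv | /eqP zw]].
    have [p1a [p1b [ep1 lz]]] := mem_split z x p1 zin.
    have ep' : p = p1a ++ rcons p1b v ++ p2 by rewrite ep ep1 -catA cat_rcons.
    have := shortcut fadjP x p p1a (rcons p1b v) p2 [::] hg ep' I.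
    by rewrite /= last_rcons lz zv size_rcons => /(_ erefl).
  have [p1a [p1b [ep1 lz]]] := mem_split z x p1 zin.
  have ep' : p = p1a ++ rcons p1b v ++ p2 by rewrite ep ep1 -catA cat_rcons.
  have := shortcut fadjP x p p1a (rcons p1b v) p2 [:: v] hg ep'.
  rewrite /= last_rcons lz zw size_rcons ltnS leqn0 => /(_ (conj wv I) erefl).
  move=> /nilP e; move: uw; rewrite /u ep1 e cats0 lz zw.
  by move=> /fadj_neq; rewrite eqxx.
have noC : forall w, fadj u w -> fadj w v -> in_arc w u v y -> False.
  move=> w uw wv hC.
  have wu : fadj w u by rewrite fadj_sym.
  case hh: (has (fun z => (z == w) || (z == u)) (v :: p2)); last first.
    have hc := sep w u v p2 wu hp2 (negbT hh); rewrite hyv in hc.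
    have yin : y \in v :: p2 by rewrite -hyv mem_last.
    have : ~~ ((y == w) || (y == u)).
      apply: (contraFN _ hh) => h; apply/hasP; by exists y.
    move=> /norP [yw yu].
    by move: hC; rewrite /in_arc hc (negPf yw) (negPf yu) eqxx.
  move/hasP: hh => [z zin /orP [/eqP zw | /eqP zu]].
    have [p2a [p2b [ep2 lz]]] := mem_split z v p2 zin.
    have ep' : p = p1 ++ (v :: p2a) ++ p2b by rewrite ep ep2.
    have := shortcut fadjP x p p1 (v :: p2a) p2b [:: w] hg ep'.
    rewrite /= -/u lz zw ltnS leqn0 => /(_ (conj uw I) erefl).
    move=> /nilP e; move: wv; rewrite -zw -lz e /=.
    by move=> /fadj_neq; rewrite eqxx.
  have [p2a [p2b [ep2 lz]]] := mem_split z v p2 zin.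
  have ep' : p = p1 ++ (v :: p2a) ++ p2b by rewrite ep ep2.
  have := shortcut fadjP x p p1 (v :: p2a) p2b [::] hg ep' I.
  by rewrite /= -/u lz zu => /(_ erefl).
have hA : forall w, fadj u w -> fadj w v -> ~~ geod_meets x y u v w ->
    in_arc u v w x && in_arc u v w y.
  move=> w h1 h2; rewrite /geod_meets negbK => /or3P [//|/andP [hx _]|/andP [_ hy']].
  - by exfalso; exact: noB w h1 h2 hx.
  - by exfalso; exact: noC w h1 h2 hy'.
have [w1 [w2 [uw1 w1v uw2 w2v [s1 s2]]]] := mediants u v huv.
have tri : forall w, fadj u w -> fadj w v -> farey_triangle u v w.
  move=> w h1 h2; split => //; split; by rewrite fadj_sym.
case g1: (geod_meets x y u v w1); first by exists w1; split => //; apply: tri.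
case g2: (geod_meets x y u v w2); first by exists w2; split => //; apply: tri.
have nuv := fadj_neq _ _ huv.
have cne : cyc u w1 v != cyc u w2 v.
  have nw1u : w1 != u by rewrite eq_sym; apply: fadj_neq.
  have nw1v : w1 != v by apply: fadj_neq.
  have nw2u : w2 != u by rewrite eq_sym; apply: fadj_neq.
  have nw2v : w2 != v by apply: fadj_neq.
  rewrite !cycB // s1 (lt_gtF s2); by case: (elt u v).
have both : forall z, in_arc u v w1 z -> in_arc u v w2 z -> (z == u) || (z == v).
  move=> z; rewrite /in_arc; case: (z == u) => //; case: (z == v) => //=.
  move: cne; by case: (cyc u z v); case: (cyc u w1 v); case: (cyc u w2 v).
have /andP [x1 y1] := hA w1 uw1 w1v (negbT g1).
have /andP [x2 y2] := hA w2 uw2 w2v (negbT g2).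
have hx := both x x1 x2; have hy2 := both y y1 y2.
have fxy : fadj x y.
  case/orP: hx => /eqP ex; case/orP: hy2 => /eqP ey; move: hxy;
    rewrite ex ey ?eqxx // => _; by rewrite // fadj_sym.
have := hd [:: y] (conj fxy I) erefl; by [].
Qed.

Local Close Scope ring_scope.

Theorem mainTheorem3 (x y : fvert) (p : seq fvert) :
  (* d_C(x,y) >= 2 *)
  (forall q, is_path fadjP x q -> last x q = y -> 2 <= size q) ->
  (* P = x :: p is a path in F joining x and y *)
  is_path fadjP x p -> last x p = y ->
  (is_geodesic fadjP x p <->
   (is_path (ladder_adj x y) x p /\ is_geodesic (ladder_adj x y) x p)).
Proof.
move=> hd hp hy; split.
  move=> hg.
  have lp : is_path (ladder_adj x y) x p.
    apply: path_of_edges; exact: core hd hg hy.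
  split => //; split => // q hq hl.
  apply: hg.2 => //; exact: lpath_fpath hq.
move=> [lp [_ hmin]]; split => // q.
have main : forall n q, size q = n -> is_path fadjP x q -> last x q = last x p ->
    (size p <= size q)%N.
  elim/ltn_ind => n IH {}q hs hq hl.
  case: (classic (is_geodesic fadjP x q)) => [hg|hng].
    apply: hmin => //; apply: path_of_edges; apply: core hd hg _.
    by rewrite hl.
  apply: NNPP => hcon; apply: hng; split => // r hr hrl.
  rewrite leqNgt; apply/negP => hlt; apply: hcon.
  have := IH (size r) _ r erefl hr _.
  rewrite -hs => /(_ hlt); rewrite hrl => /(_ hl) h.
  exact: leq_trans h (ltnW hlt).
move=> hq hl; exact: main _ q erefl hq hl.
Qed.
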